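(* Let $m\in\mathbb{N}$ and let $X=\{a_1,\dots,a_n\}\subset\mathbb{R}^m$ be a finite point cloud with at least two points, equipped with the Euclidean metric $d_X$. Let $Y=\rho_{\mathrm{UTD}}(X)\subset\mathcal{S}(\mathbb{C}^{m+1})$, let $d_Y$ be the Hilbert--Schmidt metric restricted to $Y$, and let $\lambda=r(X)\sqrt{m(m+1)}$. Then the (Vietoris--Rips) persistent homology of $(X,d_X)$ equals the persistent homology of $(Y,\lambda\,d_Y)$, i.e., for every $k\ge0$ the degree-$k$ persistence vector spaces are isomorphic (equivalently, they have the same persistence diagrams).
   Context: Notation: $\bar a=\frac1n\sum_i a_i$, $\mathrm{diam}(X)=\max_{i,j}\lVert a_i-a_j\rVert$, $r(X)=\mathrm{diam}(X)/2$. $R_m$ is the $(m+1)\times(m+1)$ orthogonal matrix with, for $i,j\le m$, $(R_m)_{ii}=\frac{1+(m-1)\sqrt{m+1}}{m\sqrt{m+1}}$, $(R_m)_{ij}=\frac{1-\sqrt{m+1}}{m\sqrt{m+1}}$ ($i\neq j$), $(R_m)_{m+1,j}=-\frac{1}{\sqrt{m+1}}$ ($j\le m$), $(R_m)_{i,m+1}=\frac1{\sqrt{m+1}}$ (all $i$). The uniform transformation is $\mathcal{T}_X(x)=\frac{1}{r(X)\sqrt{m(m+1)}}R_m\begin{bmatrix}x-\bar a\\0\end{bmatrix}+\frac{1}{m+1}\mathbf{1}_{m+1}$, and $\rho_{\mathrm{UTD}}(x)=\sum_{j=1}^{m+1}\mathcal{T}_X(x)_j|j\rangle\langle j|$ (diagonal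 density matrix). Hilbert--Schmidt metric: $d_{\mathrm{HS}}(\rho,\sigma)=\sqrt{\mathrm{Tr}[(\rho-\sigma)^\dagger(\rho-\sigma)]}$. For a finite metric space $(Z,d_Z)$ and $\epsilon\ge0$, the Vietoris--Rips complex $\mathcal{R}^\epsilon(Z,d_Z)$ is the abstract simplicial complex whose simplices are nonempty subsets $\sigma\subseteq Z$ with $\mathrm{diam}(\sigma)<\epsilon$ (all singletons included); for $\epsilon\le\epsilon'$ there are inclusions $\mathcal{R}^\epsilon\hookrightarrow\mathcal{R}^{\epsilon'}$. The degree-$k$ persistent homology of $(Z,d_Z)$ is the persistence vector space $\epsilon\mapsto H_k(\mathcal{R}^\epsilon(Z,d_Z);\mathbb{F})$ (simplicial homology over a fixed field $\mathbb{F}$) together with the linear maps induced by these inclusions. *)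

(* Defs.v *)
From HB Require Import structures.
From mathcomp Require Import all_boot all_order all_algebra.
From mathcomp Require Import finmap.
From mathcomp Require Import complex.
From mathcomp Require Import reals.
Set Implicit Arguments. Unset Strict Implicit. Unset Printing Implicit Defensive.
Import Order.TTheory GRing.Theory Num.Theory.
Local Open Scope ring_scope.
Local Open Scope fset_scope.

Section VR.
Variables (R : realType) (T : choiceType) (d : T -> T -> R) (Z : {fset T}).

Definition in_VR (eps : R) (s : {set Z}) : bool :=
  (s != set0) &&
  ((#|s| == 1)%N || [forall x in s, [forall y in s, d (val x) (val y) < eps]]).

Variable F : fieldType.

(* Vertices are
   ordered by enum_rank (a fixed total order), giving the orientation. *)
Definition chain := {set Z} -> F.

Definition face_pos (v : Z) (s : {set Z}) : nat :=
  #|[set u in s | (enum_rank u < enum_rank v)%N]|.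

(* simplicial boundary: d[v0..vk] = sum_i (-1)^i [v0..^vi..vk] *)
Definition bnd (c : chain) : chain := fun t =>
  \sum_(s : {set Z}) \sum_(v in s)
     (if (s :\ v == t) && (t != set0) then c s * (-1) ^+ face_pos v s else 0).

Definition supported (eps : R) (k : nat) (c : chain) : Prop :=
  forall s, c s != 0 -> #|s| = k.+1 /\ in_VR eps s.

Definition is_cycle (eps : R) (k : nat) (c : chain) : Prop :=
  supported eps k c /\ forall t, bnd c t = 0.

Definition is_boundary (eps : R) (k : nat) (c : chain) : Prop :=
  exists b, supported eps k.+1 b /\ forall t, c t = bnd b t.

End VR.

Definition chain_apply (F : fieldType) (Z1 Z2 : finType)
  (M : {set Z1} -> {set Z2} -> F) (c : {set Z1} -> F) : {set Z2} -> F :=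
  fun t => \sum_(s : {set Z1}) c s * M s t.

Definition chain_sub (F : fieldType) (Z : finType) (c c' : {set Z} -> F) :=
  fun t => c t - c' t.

(* The degree-k persistence vector spaces eps |-> H_k(R^eps(Z1,d1);F) and
   eps |-> H_k(R^eps(Z2,d2);F) (eps >= 0) are isomorphic: there is a family
   of linear maps phi eps on chains, inducing well-defined linear maps
   H_k^eps(Z1) -> H_k^eps(Z2) (cycles to cycles, boundaries to boundaries)
   which are bijective (surjective + injective on homology classes) and
   commute with the maps induced by the inclusions R^eps -> R^eps'.
   (Every linear map between the homology quotients lifts to such a
   chain-level linear map, so this is exactly isomorphism of
   persistence modules.) *)
Definition PH_isomorphic (R : realType) (F : fieldType) (k : nat)
  (T1 : choiceType) (d1 : T1 -> T1 -> R) (Z1 : {fset T1})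
  (T2 : choiceType) (d2 : T2 -> T2 -> R) (Z2 : {fset T2}) : Prop :=
  exists phi : R -> {set Z1} -> {set Z2} -> F,
    (forall eps, 0 <= eps ->
       (forall c, is_cycle d1 eps k c -> is_cycle d2 eps k (chain_apply (phi eps) c))
    /\ (forall c, is_boundary d1 eps k c ->
                  is_boundary d2 eps k (chain_apply (phi eps) c))
    /\ (forall z, is_cycle d2 eps k z -> exists c, is_cycle d1 eps k c /\
          is_boundary d2 eps k (chain_sub z (chain_apply (phi eps) c)))
    /\ (forall c, is_cycle d1 eps k c ->
          is_boundary d2 eps k (chain_apply (phi eps) c) -> is_boundary d1 eps k c))
 /\ (forall eps eps', 0 <= eps -> eps <= eps' ->
       forall c, is_cycle d1 eps k c ->
         is_boundary d2 eps' k
           (chain_sub (chain_apply (phi eps') c) (chain_apply (phi eps) c))).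

Section UTD.
Variables (R : realType) (m : nat).

Definition eucl_norm (v : 'cV[R]_m) : R := Num.sqrt (\sum_i v i 0 ^+ 2).
Definition eucl_dist (x y : 'cV[R]_m) : R := eucl_norm (x - y).

Definition centroid (X : {fset 'cV[R]_m}) : 'cV[R]_m :=
  (#|` X|%:R)^-1 *: \sum_(x <- X) x.

Definition diam (X : {fset 'cV[R]_m}) : R :=
  \big[Num.max/0]_(x <- X) \big[Num.max/0]_(y <- X) eucl_dist x y.

Definition radius (X : {fset 'cV[R]_m}) : R := diam X / 2.

(* the orthogonal matrix R_m (1-based indices i,j <= m are 0-based < m) *)
Definition Rmat : 'M[R]_(m + 1) := \matrix_(i, j)
  let s := Num.sqrt (m%:R + 1) in
  if ((i < m)%N && (j < m)%N) then
    (if i == j then (1 + (m%:R - 1) * s) / (m%:R * s)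
     else (1 - s) / (m%:R * s))
  else if (j < m)%N then - 1 / s
  else 1 / s.

Definition UT (X : {fset 'cV[R]_m}) (x : 'cV[R]_m) : 'cV[R]_(m + 1) :=
  (radius X * Num.sqrt (m%:R * (m%:R + 1)))^-1 *:
     (Rmat *m col_mx (x - centroid X) (0 : 'cV[R]_1))
  + (m%:R + 1)^-1 *: const_mx 1.

(* rho_UTD(x) = sum_j T_X(x)_j |j><j| as a complex matrix *)
Definition rhoUTD (X : {fset 'cV[R]_m}) (x : 'cV[R]_m) : 'M[R[i]]_(m + 1) :=
  diag_mx (\row_j ((UT X x j 0)%:C)%C).

Definition lambdaX (X : {fset 'cV[R]_m}) : R :=
  radius X * Num.sqrt (m%:R * (m%:R + 1)).

Definition rhoUTD_set (X : {fset 'cV[R]_m}) : {fset 'M[R[i]]_(m + 1)} :=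
  [fset rhoUTD X x | x in X].
End UTD.

(* Hilbert--Schmidt metric sqrt(Tr[(rho-sigma)^dagger (rho-sigma)]);
   the trace is real, Re takes it as an element of R. *)
Definition hs_dist (R : realType) (n : nat) (rho sigma : 'M[R[i]]_n) : R :=
  let D := rho - sigma in
  Num.sqrt (@complex.Re R (\tr ((map_mx Num.conj D)^T *m D))).

(* Main.v *)
Require Import Defs.
From HB Require Import structures.
From mathcomp Require Import all_boot all_order all_algebra.
From mathcomp Require Import finmap complex reals.
From mathcomp Require Import zify ring lra.
Import Order.TTheory GRing.Theory Num.Theory.
Local Open Scope ring_scope.

Lemma card_sep_sum (T : finType) (A : {set T}) (P : pred T) :
  #|[set u in A | P u]| = (\sum_(u in A) (P u : nat))%N.
Proof.
rewrite -sum1_card (eq_bigl (fun u => (u \in A) && P u)); last first.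
  by move=> u; rewrite inE.
rewrite big_mkcondr /=; apply: eq_bigr => u _; by case: (P u).
Qed.

Lemma split_lt (a b c d : nat) : c != d ->
  (((a < b)%N : nat) = (((a < b) && (c < d)) + ((a < b) && (d < c))))%N.
Proof.
move=> ne; case: (a < b)%N => //=; case: ltngtP ne => //.
Qed.

Section Iso.
Variables (T1 T2 : choiceType) (Z1 : {fset T1}) (Z2 : {fset T2}) (F : fieldType).
Variables (f : Z1 -> Z2) (g : Z2 -> Z1) (fK : cancel f g) (gK : cancel g f).

Lemma imfK (s : {set Z1}) : g @: (f @: s) = s.
Proof. by rewrite -imset_comp (eq_imset _ fK) imset_id. Qed.
Lemma imgK (t : {set Z2}) : f @: (g @: t) = t.
Proof. by rewrite -imset_comp (eq_imset _ gK) imset_id. Qed.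

Let finj : injective f := can_inj fK.
Let ginj : injective g := can_inj gK.

Definition r1 (u : Z1) : nat := enum_rank u.
Definition r2 (u : Z1) : nat := enum_rank (f u).

Definition invc (s : {set Z1}) : nat :=
  (\sum_(x in s) \sum_(y in s) (((r1 x < r1 y) && (r2 y < r2 x))%N : nat))%N.

Definition sgn (s : {set Z1}) : F := (-1) ^+ invc s.

Definition Mf : {set Z1} -> {set Z2} -> F :=
  fun s t => if f @: s == t then sgn s else 0.

Definition phiC (c : chain Z1 F) : chain Z2 F := fun t => sgn (g @: t) * c (g @: t).
Definition psiC (z : chain Z2 F) : chain Z1 F := fun s => sgn s * z (f @: s).

Lemma chain_applyE c t : chain_apply Mf c t = phiC c t.
Proof.
rewrite /chain_apply (bigD1 (g @: t)) //= big1 => [|s ne].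
  by rewrite /Mf imgK eqxx addr0 mulrC.
rewrite /Mf; case: eqP => [e|]; last by rewrite mulr0.
by case/eqP: ne; rewrite -e imfK.
Qed.

Lemma sgn_sq s : sgn s * sgn s = 1.
Proof. by rewrite /sgn -exprD addnn -mul2n exprM sqrrN !expr1n. Qed.

Lemma sgn_neq0 s : sgn s != 0.
Proof. by rewrite /sgn signr_eq0. Qed.

Lemma phi_psi z t : phiC (psiC z) t = z t.
Proof. by rewrite /phiC /psiC imgK mulrA sgn_sq mul1r. Qed.

Lemma phiC_inj c c' : (forall t, phiC c t = phiC c' t) -> forall s, c s = c' s.
Proof.
move=> h s; have := h (f @: s); rewrite /phiC imfK.
by move/(mulfI (sgn_neq0 s)).
Qed.

Lemma r2_inj {u v} : u != v -> r2 u != r2 v.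
Proof.
apply: contra => /eqP e; apply/eqP; apply: finj; apply: enum_rank_inj.
by apply: val_inj.
Qed.
Lemma r1_inj {u v} : u != v -> r1 u != r1 v.
Proof.
apply: contra => /eqP e; apply/eqP; apply: enum_rank_inj.
by apply: val_inj.
Qed.

Lemma sumD1 (s : {set Z1}) v (G : Z1 -> nat) :
  (\sum_(x in s :\ v) G x = \sum_(x | (x \in s) && (x != v)) G x)%N.
Proof. by apply: eq_bigl => x; rewrite in_setD1 andbC. Qed.

Lemma parity (s : {set Z1}) (v : Z1) : v \in s ->
  (invc s + face_pos (f v) (f @: s) =
   invc (s :\ v) + face_pos v s +
   2 * \sum_(u | (u \in s) && (u != v)) (((r1 v < r1 u) && (r2 u < r2 v))%N : nat))%N.
Proof.
move=> vs.
set P := fun x y : Z1 => (((r1 x < r1 y) && (r2 y < r2 x))%N : nat).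
have Pvv : P v v = 0%N by rewrite /P ltnn.
have Hi : (invc s = \sum_(u | (u \in s) && (u != v)) P v u
              + \sum_(u | (u \in s) && (u != v)) P u v + invc (s :\ v))%N.
  rewrite /invc (bigD1 v) //= (bigD1 v) //= -/(P v v) Pvv add0n -addnA.
  congr (_ + _)%N.
  rewrite sumD1 -big_split /=; apply: eq_bigr => x _.
  rewrite (bigD1 v) //=. congr (_ + _)%N. by rewrite sumD1.
have Hf1 : (face_pos v s = \sum_(u | (u \in s) && (u != v)) (((r1 u < r1 v) && (r2 u < r2 v))%N : nat)
         + \sum_(u | (u \in s) && (u != v)) P u v)%N.
  rewrite /face_pos card_sep_sum (bigD1 v) //= ltnn add0n -big_split /=.
  apply: eq_bigr => u /andP [_ uv]; rewrite /P.
  by rewrite (split_lt (r1 u) (r1 v) _ _ (r2_inj uv)).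
have Hf2 : (face_pos (f v) (f @: s) = \sum_(u | (u \in s) && (u != v)) (((r1 u < r1 v) && (r2 u < r2 v))%N : nat)
         + \sum_(u | (u \in s) && (u != v)) P v u)%N.
  rewrite /face_pos card_sep_sum big_imset /=; last by move=> x y _ _; apply: finj.
  rewrite (bigD1 v) //= ltnn add0n -big_split /=.
  apply: eq_bigr => u /andP [_ uv]; rewrite /P.
  rewrite (split_lt (r2 u) (r2 v) _ _ (r1_inj uv)) addnC.
  by case: (r2 u < r2 v)%N; case: (r1 v < r1 u)%N; case: (r1 u < r1 v)%N.
rewrite Hi Hf1 Hf2; rewrite /P; lia.
Qed.


Lemma sgn_face (s : {set Z1}) (v : Z1) : v \in s ->
  sgn s * (-1) ^+ face_pos (f v) (f @: s) = sgn (s :\ v) * (-1) ^+ face_pos v s.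
Proof.
move=> vs; rewrite /sgn -!exprD parity // exprD exprM sqrrN !expr1n mulr1.
by [].
Qed.

Lemma imsetD1f (s : {set Z1}) v : f @: (s :\ v) = f @: s :\ f v.
Proof.
apply/setP => x; rewrite -[x]gK in_setD1 !(mem_imset (f:=f) _ _ finj).
by rewrite (inj_eq finj) in_setD1.
Qed.

Lemma bnd_phi c t : bnd (phiC c) t = phiC (bnd c) t.
Proof.
rewrite /bnd /phiC.
rewrite (reindex (fun s1 : {set Z1} => f @: s1)) /=; last first.
  exact: (onW_bij _ (Bijective imfK imgK)).
rewrite big_distrr /=; apply: eq_bigr => s1 _.
rewrite big_imset /=; last by move=> x y _ _; apply finj.
rewrite big_distrr /=; apply: eq_bigr => v vs.
have E1 : (f @: s1 :\ f v == t) = (s1 :\ v == g @: t).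
  by rewrite -imsetD1f -{1}(imgK t) (inj_eq (imset_inj finj)).
have E2 : (t != set0) = (g @: t != set0) by rewrite imset_eq0.
rewrite E1 -E2 imfK; case: ifP => [/andP [/eqP e _] | _]; last by rewrite mulr0.
rewrite -e [sgn s1 * _]mulrC -mulrA sgn_face // mulrCA.
by [].
Qed.

Variables (R : realType) (d1 : T1 -> T1 -> R) (d2 : T2 -> T2 -> R).
Hypothesis hd : forall x y : Z1, d2 (val (f x)) (val (f y)) = d1 (val x) (val y).

Lemma supp_phi eps k c : supported d1 eps k c -> supported d2 eps k (phiC c).
Proof.
move=> sc t; rewrite /phiC => nz.
have nz' : c (g @: t) != 0 by apply: contra nz => /eqP ->; rewrite mulr0.
case: (sc _ nz') => cd vr; split.
  by rewrite -cd card_imset.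
move: vr; rewrite /in_VR imset_eq0 card_imset // => /andP [-> /=].
case/orP => [-> //|/forallP H]; apply/orP; right; apply/forallP => x; apply/implyP => xt.
apply/forallP => y; apply/implyP => yt.
rewrite -(gK x) -(gK y) hd.
have /implyP := H (g x); rewrite mem_imset // => /(_ xt) /forallP /(_ (g y)) /implyP.
by rewrite mem_imset // => /(_ yt).
Qed.

Lemma supp_psi eps k z : supported d2 eps k z -> supported d1 eps k (psiC z).
Proof.
move=> sc s; rewrite /psiC => nz.
have nz' : z (f @: s) != 0 by apply: contra nz => /eqP ->; rewrite mulr0.
case: (sc _ nz') => cd vr; split.
  by rewrite -cd card_imset.
move: vr; rewrite /in_VR imset_eq0 card_imset // => /andP [-> /=].
case/orP => [-> //|/forallP H]; apply/orP; right; apply/forallP => x; apply/implyP => xt.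
apply/forallP => y; apply/implyP => yt.
rewrite -hd.
have /implyP := H (f x); rewrite mem_imset // => /(_ xt) /forallP /(_ (f y)) /implyP.
by rewrite mem_imset // => /(_ yt).
Qed.


Lemma PH_iso_bij (k : nat) : PH_isomorphic F k d1 Z1 d2 Z2.
Proof.
have supp_ext : forall (T : choiceType) (d : T -> T -> R) (Z : {fset T}) eps k (c c' : chain Z F),
    (forall t, c t = c' t) -> supported d eps k c -> supported d eps k c'.
  by move=> T d Z eps k' c c' e sc t; rewrite -e => /sc.
have bnd_ext : forall (T : choiceType) (Z : {fset T}) (c c' : chain Z F),
    (forall t, c t = c' t) -> forall t, bnd c t = bnd c' t.
  move=> T Z c c' e t; rewrite /bnd; apply: eq_bigr => s _; apply: eq_bigr => v _.
  by rewrite e.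
have bnd0 : forall (T : choiceType) (Z : {fset T}) t, bnd (fun _ : {set Z} => (0 : F)) t = 0.
  move=> T Z t; rewrite /bnd big1 // => s _; rewrite big1 // => v _.
  by case: ifP => _; rewrite ?mul0r.
have bd0 : forall (T : choiceType) (d : T -> T -> R) (Z : {fset T}) eps k (c : chain Z F),
    (forall t, c t = 0) -> is_boundary d eps k c.
  move=> T d Z eps k' c e; exists (fun _ => 0); split.
    by move=> s; rewrite eqxx.
  by move=> t; rewrite e bnd0.
exists (fun _ => Mf); split => [eps _ | eps eps' _ _ c _]; last first.
  by apply: bd0 => t; rewrite /chain_sub subrr.
split; [|split; [|split]].
- move=> c [sc bc]; split.
    apply: (supp_ext _ _ _ _ _ (phiC c)); first by move=> t; rewrite chain_applyE.
    exact: supp_phi.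
  move=> t; rewrite (bnd_ext _ _ _ (phiC c)); last by move=> u; rewrite chain_applyE.
  by rewrite bnd_phi /phiC bc mulr0.
- move=> c [b [sb hb]]; exists (phiC b); split; first exact: supp_phi.
  by move=> t; rewrite chain_applyE bnd_phi /phiC hb.
- move=> z [sz bz]; exists (psiC z); split.
    split; first exact: supp_psi.
    apply: (phiC_inj _ (fun _ => 0)) => t.
    rewrite -bnd_phi (bnd_ext _ _ _ z); last by move=> u; rewrite phi_psi.
    by rewrite bz /phiC mulr0.
  by apply: bd0 => t; rewrite /chain_sub chain_applyE phi_psi subrr.
- move=> c [sc bc] [b2 [sb2 hb2]]; exists (psiC b2); split; first exact: supp_psi.
  apply: phiC_inj => t; rewrite -bnd_phi -chain_applyE hb2.
  by apply: bnd_ext => u; rewrite phi_psi.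
Qed.

End Iso.


Section Geo.
Variables (R : realType) (m : nat).

Lemma Rmat_coeffs (mpos : (0 < m)%N) :
  let s := Num.sqrt (m%:R + 1 : R) in
  (1 + (m%:R - 1) * s) / (m%:R * s) = 1 + (1 - s) / (m%:R * s)
  /\ 2 * ((1 - s) / (m%:R * s)) + m%:R * ((1 - s) / (m%:R * s)) ^+ 2 + (1 / s) ^+ 2 = 0.
Proof.
move=> s.
have s2 : s ^+ 2 = m%:R + 1 by rewrite sqr_sqrtr // addr_ge0 ?ler0n.
have s0 : s != 0 by rewrite sqrtr_eq0 -ltNge ltr_wpDl ?ler0n.
have m0 : (m%:R : R) != 0 by rewrite pnatr_eq0 -lt0n.
split; first by field; rewrite s0 m0.
apply: (@eq_trans _ _ (((1 + m%:R) - s ^+ 2) / (m%:R * s ^+ 2))).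
  by field; rewrite s0 m0.
by rewrite s2 [m%:R + 1]addrC subrr mul0r.
Qed.


Definition sR : R := Num.sqrt (m%:R + 1).
Definition bR : R := (1 - sR) / (m%:R * sR).

Lemma zero_entry p q (i : 'I_p) (j : 'I_q) : (0 : 'M[R]_(p, q)) i j = 0.
Proof. by rewrite mxE. Qed.

Lemma Rmat_entry_l (mpos : (0 < m)%N) (v : 'cV[R]_m) (i : 'I_m) :
  (Rmat R m *m col_mx v 0) (lshift 1 i) 0 = v i 0 + bR * \sum_j v j 0.
Proof.
rewrite mxE big_split_ord /= big_ord1 col_mxEd zero_entry mulr0 addr0.
under eq_bigr => j _ do rewrite col_mxEu /Rmat mxE /= !ltn_ord /= (inj_eq (@lshift_inj _ _)).
rewrite (bigD1 i) //= eqxx (bigD1 i (_ : true)) //= mulrDr.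
have [ha _] := Rmat_coeffs mpos; rewrite -/sR in ha; rewrite ha -/bR.
rewrite mulrDl mul1r -addrA; congr (_ + _).
congr (_ + _); rewrite mulr_sumr; apply: eq_bigr => j ji; rewrite eq_sym (negbTE ji) //.
Qed.


Lemma Rmat_entry_r (v : 'cV[R]_m) :
  (Rmat R m *m col_mx v 0) (rshift m ord0) 0 = - (1 / sR) * \sum_j v j 0.
Proof.
rewrite mxE big_split_ord /= big_ord1 col_mxEd zero_entry mulr0 addr0.
rewrite mulr_sumr; apply: eq_bigr => j _.
rewrite col_mxEu /Rmat mxE /= ltn_ord /= addn0 ltnn /= -/sR.
by rewrite mulNr.
Qed.

Lemma sum_sqr_shift (v : 'cV[R]_m) (c : R) :
  \sum_(i < m) (v i 0 + c) ^+ 2 =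
  \sum_i v i 0 ^+ 2 + 2 * c * \sum_i v i 0 + m%:R * c ^+ 2.
Proof.
under eq_bigr do rewrite sqrrD.
rewrite !big_split /= -mulr_suml sumr_const card_ord -(mulr_natl (c ^+ 2) m).
set A := \sum_(i < m) _; set S := \sum_(i < m) _; clearbody A S; ring.
Qed.

Lemma Rmat_norm (v : 'cV[R]_m) :
  \sum_(i < m + 1) ((Rmat R m *m col_mx v 0) i 0) ^+ 2 = \sum_i (v i 0) ^+ 2.
Proof.
case: (posnP m) => [m0|mpos].
  have v0 : v = 0.
    by apply/matrixP => i; have := ltn_ord i; rewrite {2}m0.
  rewrite v0 col_mx0 mulmx0 big1; last by move=> i _; rewrite zero_entry expr0n.
  by rewrite big1 // => i _; rewrite zero_entry expr0n.
rewrite big_split_ord /= big_ord1.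
under eq_bigr do rewrite Rmat_entry_l //.
rewrite Rmat_entry_r sum_sqr_shift.
have [_ h] := Rmat_coeffs mpos; rewrite -/sR -/bR in h.
set A := \sum_i v i 0 ^+ 2; set S := \sum_i v i 0.
apply: (@eq_trans _ _ (A + S ^+ 2 * (2 * bR + m%:R * bR ^+ 2 + (1 / sR) ^+ 2))).
  by ring.
by rewrite h mulr0 addr0.
Qed.


Variable X : {fset 'cV[R]_m}.

Lemma UT_diff x y :
  UT X x - UT X y = (lambdaX X)^-1 *: (Rmat R m *m col_mx (x - y) 0).
Proof.
rewrite /UT /lambdaX opprD addrACA subrr addr0 -scalerBr -mulmxBr.
by rewrite opp_col_mx add_col_mx oppr0 addr0 opprB addrA subrK.
Qed.

Lemma hs_formula x y : hs_dist (rhoUTD X x) (rhoUTD X y) =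
  Num.sqrt (\sum_i (UT X x i 0 - UT X y i 0) ^+ 2).
Proof.
rewrite /hs_dist /mxtrace; congr Num.sqrt.
have cj : forall a : R, Num.conj (a%:C)%C = (a%:C)%C := fun a => conjc_real a.
rewrite -[RHS]/(complex.Re ((\sum_i (UT X x i 0 - UT X y i 0) ^+ 2)%:C)%C).
congr complex.Re; rewrite rmorph_sum; apply: eq_bigr => i _.
rewrite mxE (bigD1 i) //= big1 ?addr0.
  by rewrite !mxE !eqxx !mulr1n -rmorphB cj -rmorphM expr2.
move=> j ji; rewrite !mxE (negbTE ji) !mulr0n subrr mulr0 //.
Qed.


Lemma lam_hs (lpos : 0 < lambdaX X) x y :
  lambdaX X * hs_dist (rhoUTD X x) (rhoUTD X y) = eucl_dist x y.
Proof.
rewrite hs_formula.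
have e : forall i, UT X x i 0 - UT X y i 0 =
    (lambdaX X)^-1 * (Rmat R m *m col_mx (x - y) 0) i 0.
  move=> i; transitivity ((UT X x - UT X y) i 0); first by rewrite !mxE.
  by rewrite UT_diff [LHS]mxE.
under eq_bigr do rewrite e exprMn.
rewrite -mulr_sumr Rmat_norm sqrtrM ?sqr_ge0 // sqrtr_sqr ger0_norm ?invr_ge0 ?ltW //.
by rewrite mulrA divff ?mul1r // gt_eqF.
Qed.

End Geo.
Lemma eucl_dist_eq0 (R : realType) m (x y : 'cV[R]_m) : eucl_dist x y = 0 -> x = y.
Proof.
rewrite /eucl_dist /eucl_norm => /eqP; rewrite sqrtr_eq0 => hle.
have h0 : \sum_i (x - y) i 0 ^+ 2 = 0.
  by apply/le_anti; rewrite hle sumr_ge0 // => i _; rewrite sqr_ge0.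
apply/eqP; rewrite -subr_eq0; apply/eqP/matrixP => i j.
rewrite (ord1 j) zero_entry.
have := psumr_eq0P (fun i _ => sqr_ge0 ((x - y) i 0)) h0 (i := i) isT.
by move/eqP; rewrite sqrf_eq0 => /eqP.
Qed.

Lemma eucl_dist_xx (R : realType) m (x : 'cV[R]_m) : eucl_dist x x = 0.
Proof.
rewrite /eucl_dist /eucl_norm subrr big1 ?sqrtr0 // => i _.
by rewrite zero_entry expr0n.
Qed.

Local Open Scope fset_scope.

Theorem mainTheorem3 (R : realType) (m : nat) (X : {fset 'cV[R]_m})
  (F : fieldType) (k : nat) :
  (2 <= #|` X|)%N ->
  PH_isomorphic F k (@eucl_dist R m) X
    (fun p q => lambdaX X * hs_dist p q) (rhoUTD_set X).
Proof.
move=> h2.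
have [x0 [y0 [x0X [y0X nxy]]]] : exists x y, x \in X /\ y \in X /\ x != y.
  case: (pickP (fun p : X * X => p.1 != p.2)) => [[a b] /= ab | none].
    exists (val a), (val b); split; first exact: fsvalP.
    by split; [exact: fsvalP | rewrite (inj_eq val_inj)].
  exfalso; have : (#|{: X}| <= 1)%N.
    apply/card_le1_eqP => a b _ _; have := none (b, a) => /=.
    by move/negbFE/eqP.
  by rewrite -cardfE; lia.
have mpos : (0 < m)%N.
  case: (posnP m) => // m0; exfalso; move/eqP: nxy; apply.
  by apply/matrixP => i; have := ltn_ord i; rewrite {2}m0.
have dpos : 0 < eucl_dist x0 y0.
  rewrite lt_def sqrtr_ge0 andbT; apply/eqP => /eucl_dist_eq0 e.
  by move/eqP: nxy.
have diampos : 0 < diam X.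
  apply: (lt_le_trans dpos); rewrite /diam.
  apply: le_trans (le_bigmax_seq 0 x0 xpredT _ x0X isT).
  exact: (le_bigmax_seq 0 y0 xpredT _ y0X isT).
have lpos : 0 < lambdaX X.
  rewrite /lambdaX /radius mulr_gt0 ?divr_gt0 // sqrtr_gt0 mulr_gt0 //.
    by rewrite ltr0n.
  by rewrite ltr_wpDl ?ler0n.
have rinj : {in X &, injective (rhoUTD X)}.
  move=> a b _ _ e; apply: eucl_dist_eq0.
  by rewrite -(@lam_hs R m X lpos) e lam_hs // eucl_dist_xx.
have memf : forall x : X, rhoUTD X (val x) \in rhoUTD_set X.
  by move=> x; apply/imfsetP; exists (val x) => //; exact: fsvalP.
pose fX := fun x : X => ([` memf x] : rhoUTD_set X).
have finj : injective fX.
  by move=> a b /(congr1 val) /= e; apply: val_inj; apply: rinj => //; exact: fsvalP.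
have hc : #|` rhoUTD_set X| = #|` X|.
  by apply/eqP/card_in_imfsetP.
have [g fK gK] := inj_card_bij finj (eq_leq (etrans (esym (cardfE _)) (etrans hc (cardfE _)))).
have hd : forall a b : X, (fun p q => lambdaX X * hs_dist p q) (val (fX a)) (val (fX b))
    = eucl_dist (val a) (val b).
  by move=> a b /=; rewrite lam_hs.
exact: (@PH_iso_bij _ _ _ _ F _ _ fK gK _ _ _ hd k).
Qed.
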